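(* Let $\mathcal{X}$ be a connected $n$-premaniplex with base flag $x_0$ and $N=\operatorname{Stab}_{\mathcal{C}^n}(x_0)$, and let $(\mathcal{Y},\eta)$ be an $(n,m)$-voltage operator that preserves connectivity, with base flag $y_0$ of $\mathcal{Y}$, $L=\operatorname{Stab}_{\mathcal{C}^m}(y_0)$ and $\zeta:L\to\mathcal{C}^n$, $\zeta(\omega)=\eta(W_\omega(y_0))$. For $\upsilon\in\mathcal{C}^m$ let $\mathcal{Z}_\upsilon=\mathcal{C}^n/\zeta(L\cap L^\upsilon)$. If for every $\upsilon\in\mathcal{C}^m\setminus\operatorname{N}_{\mathcal{C}^m}(L)$ the premaniplex $\mathcal{X}$ does not cover $\mathcal{Z}_\upsilon$, then every automorphism of $\mathcal{X}\rtimes_\eta\mathcal{Y}$ is a lift of an automorphism of $\mathcal{Y}$.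
   Context: An $n$-premaniplex is an edge-coloured graph (semi-edges and parallel edges allowed) with colours $\{0,\dots,n-1\}$ such that every vertex (flag) is the start of exactly one dart of each colour, and for $|i-j|\ge2$ alternating $i,j$-paths of length 4 are closed; $x^i$ is the $i$-adjacent flag of $x$. $\mathcal{C}^n=\langle r_0,\dots,r_{n-1}\mid r_i^2,\ (r_ir_j)^2\ (|i-j|\ge2)\rangle$ acts on the left on flags by $r_ix=x^i$; automorphisms act on the right. A covering is a surjective map of flags preserving all adjacencies. $L^\upsilon=\upsilon^{-1}L\upsilon$ and $\operatorname{N}_{\mathcal{C}^m}(L)$ is the normaliser. For a subgroup $K\le\mathcal{C}^n$, $\mathcal{C}^n/K$ has flags the left cosets $\omega K$ with $(\omega K)^i=r_i\omega K$. For a flag $y$ of an $m$-premaniplex $\mathcal{Y}$ and $\omega\in\mathcal{C}^m$, $W_\omega(y)$ is the homotopy class of paths from $y$ whose colour sequence $i_1,\dots,i_k$ satisfies $r_{i_k}\cdots r_{i_1}=\omega$; these form the fundamental groupoid $\Pi(\mathcal{Y})$. A voltage assignment $\eta:\Pi(\mathcal{Y})\to\mathcal{C}^n$ satisfies $\eta(W_1W_2)=\eta(W_2)\eta(W_1)$; $(\mathcal{Y},\eta)$ is an $(n,m)$-voltage operator. $\mathcal{X}\rtimes_\eta\mathcal{Y}$ has flags $\mathcal{X}\times\mathcal{Y}$ and $(x,y)^i=(\eta(W_{r_i}(y))x,r_iy)$, $i\in\{0,\dots,m-1\}$. The operator preserves connectivity if $\mathcal{X}\rtimes_\eta\mathcal{Y}$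 is connected whenever $\mathcal{X}$ is. $\gamma\in\operatorname{Aut}(\mathcal{X}\rtimes_\eta\mathcal{Y})$ is a lift of $\tau\in\operatorname{Aut}(\mathcal{Y})$ if the $\mathcal{Y}$-coordinate of $(x,y)\gamma$ is $y\tau$ for all $(x,y)$. Standing convention: $\mathcal{Y}$ has a spanning tree all of whose darts have trivial voltage. *)

(* Defs.v *)
From Stdlib Require Import Relations PropExtensionality FunctionalExtensionality.
From HB Require Import structures.
From mathcomp Require Import all_boot.

Set Implicit Arguments.
Unset Strict Implicit.
Unset Printing Implicit Defensive.

(* The group C^n = < r_0..r_{n-1} | r_i^2, (r_i r_j)^2 (|i-j|>=2) >.  *)
(* An element is represented by a word [:: a1; ...; ak] standing for   *)
(* the product r_{a1} r_{a2} ... r_{ak}; multiplication is              *)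
(* concatenation, the inverse of a word is its reversal, and equality *)
(* in C^n is the congruence [ceq] generated by the defining relators. *)

Definition word (n : nat) := seq 'I_n.

Definition far n (i j : 'I_n) : bool := (i + 2 <= j)%N || (j + 2 <= i)%N.

Inductive cstep (n : nat) : word n -> word n -> Prop :=
| cstep_sq (u v : word n) (i : 'I_n) :
    cstep (u ++ [:: i; i] ++ v) (u ++ v)
| cstep_far (u v : word n) (i j : 'I_n) :
    far i j -> cstep (u ++ [:: i; j; i; j] ++ v) (u ++ v).

Definition ceq (n : nat) : relation (word n) :=
  clos_refl_sym_trans (word n) (@cstep n).

Lemma ceq_refl n (w : word n) : ceq w w.
Proof. exact: rst_refl. Qed.

Lemma ceq_trans n (a b c : word n) : ceq a b -> ceq b c -> ceq a c.
Proof. exact: rst_trans. Qed.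

Lemma ceq_cons n (i : 'I_n) (w w' : word n) : ceq w w' -> ceq (i :: w) (i :: w').
Proof.
elim=> {w w'} [w w' s| w | w w' _ IH | w1 w2 w3 _ IH1 _ IH2].
- apply: rst_step; case: s => [u v j|u v j k h].
  + exact: (cstep_sq (i :: u) v j).
  + exact: (cstep_far (i :: u) v h).
- exact: rst_refl.
- exact: rst_sym.
- exact: rst_trans IH1 IH2.
Qed.

(* Premaniplexes.  A flag-graph with colours 'I_n in which every flag *)
(* starts exactly one dart of each colour is given by the i-adjacent  *)
(* flag maps  x |-> x^i (semi-edges: x^i = x; parallel edges allowed). *)

Record premaniplex (n : nat) := Premaniplex {
  flag :> Type;
  adj : 'I_n -> flag -> flag
}.
Arguments adj {n X} i x : rename.

Definition is_premaniplex n (X : premaniplex n) : Prop :=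
  (forall (i : 'I_n) (x : X), adj i (adj i x) = x) /\
  (forall (i j : 'I_n) (x : X), far i j -> adj j (adj i (adj j (adj i x))) = x).

Definition act n (X : premaniplex n) (w : word n) (x : X) : X :=
  foldr (fun i y => adj i y) x w.

Definition connected n (X : premaniplex n) : Prop :=
  forall x y : X, exists w : word n, act w x = y.

Definition covers n (X Z : premaniplex n) : Prop :=
  exists f : X -> Z,
    (forall (i : 'I_n) (x : X), f (adj i x) = adj i (f x)) /\
    (forall z : Z, exists x : X, f x = z).

Definition is_automorphism n (X : premaniplex n) (g : X -> X) : Prop :=
  bijective g /\ forall (i : 'I_n) (x : X), g (adj i x) = adj i (g x).

(* Voltage assignments.  The element W_omega(y) of the fundamental    *)
(* groupoid Pi(Y) is the pair (y, omega), omega in C^m; so a voltage   *)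
(* assignment is eta : Y -> word m -> word n, well defined on C^m,     *)
(* with eta(W1 W2) = eta(W2) eta(W1), i.e. for W1 = W_w(y) and         *)
(* W2 = W_w'(w y):  eta(y, w' w) = eta(w y, w') eta(y, w).             *)

Definition voltage_assignment n m (Y : premaniplex m)
    (eta : Y -> word m -> word n) : Prop :=
  (forall (y : Y) (w w' : word m), ceq w w' -> ceq (eta y w) (eta y w')) /\
  (forall (y : Y) (w w' : word m),
      ceq (eta y (w' ++ w)) (eta (act w y) w' ++ eta y w)).

(* Standing convention: Y has a spanning tree all of whose darts have *)
(* trivial voltage.  A spanning tree is encoded as a rooted tree: a   *)
(* root r, and for every other flag y a parent edge of colour par y   *)
(* leading to y^(par y), with a depth function strictly decreasing    *)
(* towards the root.                                                  *)
Definition trivial_spanning_tree n m (Y : premaniplex m)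
    (eta : Y -> word m -> word n) : Prop :=
  exists (r : Y) (par : Y -> 'I_m) (depth : Y -> nat),
    forall y : Y, y <> r ->
      (depth (adj (par y) y) < depth y)%N /\ ceq (eta y [:: par y]) [::].

Definition voltage_operator n m (Y : premaniplex m)
    (eta : Y -> word m -> word n) : Prop :=
  is_premaniplex Y /\ voltage_assignment eta /\ trivial_spanning_tree eta.

Definition mix n m (X : premaniplex n) (Y : premaniplex m)
    (eta : Y -> word m -> word n) : premaniplex m :=
  @Premaniplex m (X * Y)%type
    (fun i p => (act (eta p.2 [:: i]) p.1, adj i p.2)).
Arguments mix {n m} X Y eta.

Definition preserves_connectivity n m (Y : premaniplex m)
    (eta : Y -> word m -> word n) : Prop :=
  forall X : premaniplex n, is_premaniplex X -> connected X ->
    connected (mix X Y eta).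

Definition is_lift n m (X : premaniplex n) (Y : premaniplex m)
    (eta : Y -> word m -> word n) (g : mix X Y eta -> mix X Y eta)
    (tau : Y -> Y) : Prop :=
  forall p : mix X Y eta, (g p).2 = tau p.2.

Definition stab m (Y : premaniplex m) (y0 : Y) : word m -> Prop :=
  fun w => act w y0 = y0.

Definition conj_set m (L : word m -> Prop) (u : word m) : word m -> Prop :=
  fun w => exists l, L l /\ ceq w (rev u ++ l ++ u).

Definition in_normaliser m (L : word m -> Prop) (u : word m) : Prop :=
  forall w, conj_set L u w <-> L w.

Definition zeta_img n m (Y : premaniplex m) (eta : Y -> word m -> word n)
    (y0 : Y) (S : word m -> Prop) : word n -> Prop :=
  fun w => exists v, S v /\ ceq w (eta y0 v).

Definition lcoset n (K : word n -> Prop) (w : word n) : word n -> Prop :=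
  fun u => exists k, K k /\ ceq u (w ++ k).

Definition lmul n (i : 'I_n) (P : word n -> Prop) : word n -> Prop :=
  fun u => exists v, P v /\ ceq u (i :: v).

Lemma lmul_lcoset n (K : word n -> Prop) (i : 'I_n) (w : word n) :
  lmul i (lcoset K w) = lcoset K (i :: w).
Proof.
apply: functional_extensionality => u; apply: propositional_extensionality.
split.
- case=> v [[k [Kk Hv]] Hu]; exists k; split=> //.
  exact: ceq_trans Hu (ceq_cons i Hv).
- case=> k [Kk Hu]; exists (w ++ k); split=> //.
  by exists k; split=> //; apply: ceq_refl.
Qed.

Definition coset_flag n (K : word n -> Prop) :=
  {P : word n -> Prop | exists w, P = lcoset K w}.

Lemma coset_adj_proof n (K : word n -> Prop) (i : 'I_n) (P : coset_flag K) :
  exists w, lmul i (sval P) = lcoset K w.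
Proof. case: P => /= P [w ->]; exists (i :: w); exact: lmul_lcoset. Qed.

Definition coset_premaniplex n (K : word n -> Prop) : premaniplex n :=
  @Premaniplex n (coset_flag K)
    (fun i P => exist _ (lmul i (sval P)) (coset_adj_proof i P)).

Definition Zups n m (Y : premaniplex m) (eta : Y -> word m -> word n)
    (y0 : Y) (u : word m) : premaniplex n :=
  coset_premaniplex
    (zeta_img eta y0 (fun w => stab y0 w /\ conj_set (stab y0) u w)).

(* Main.v *)
Require Import Defs.
From mathcomp Require Import all_boot.
From Stdlib Require Import Relations PropExtensionality FunctionalExtensionality ProofIrrelevance ClassicalEpsilon.

Set Implicit Arguments.
Unset Strict Implicit.
Unset Printing Implicit Defensive.

Lemma far_sym n (i j : 'I_n) : far i j -> far j i.
Proof. by rewrite /far orbC. Qed.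

Lemma ceq_sym n (a b : word n) : ceq a b -> ceq b a.
Proof. exact: rst_sym. Qed.

Lemma ceq_catl n (a a' b : word n) : ceq a a' -> ceq (a ++ b) (a' ++ b).
Proof.
elim=> {a a'} [a a' s| a | a a' _ IH | a1 a2 a3 _ IH1 _ IH2].
- apply: rst_step; case: s => [u v j|u v j k h]; rewrite -!catA.
  + exact: (cstep_sq u (v ++ b) j).
  + exact: (cstep_far u (v ++ b) h).
- exact: rst_refl.
- exact: rst_sym.
- exact: rst_trans IH1 IH2.
Qed.

Lemma ceq_catr n (c b b' : word n) : ceq b b' -> ceq (c ++ b) (c ++ b').
Proof. elim: c => [|i c IH] //= H; exact: ceq_cons (IH H). Qed.

Lemma ceq_cat n (a a' b b' : word n) : ceq a a' -> ceq b b' -> ceq (a ++ b) (a' ++ b').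
Proof. move=> H1 H2; apply: ceq_trans (ceq_catl _ H1) (ceq_catr _ H2). Qed.

Lemma ceq_cancel n (b c : word n) : ceq (b ++ rev b ++ c) c.
Proof.
elim: b c => [|i b IH] c /=; first exact: ceq_refl.
rewrite rev_cons -cats1 -catA.
apply: ceq_trans (ceq_cons i (IH ([:: i] ++ c))) _.
exact: rst_step (cstep_sq [::] c i).
Qed.

Lemma ceq_cancel' n (b c : word n) : ceq (rev b ++ b ++ c) c.
Proof. by have := ceq_cancel (rev b) c; rewrite revK. Qed.

Lemma act_cat n (X : premaniplex n) (a b : word n) (x : X) :
  act (a ++ b) x = act a (act b x).
Proof. by rewrite /act foldr_cat. Qed.

Lemma act_ceq n (X : premaniplex n) (a b : word n) (x : X) :
  is_premaniplex X -> ceq a b -> act a x = act b x.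
Proof.
move=> [H1 H2]; elim=> {a b} [a b s| a | a b _ IH | a1 a2 a3 _ IH1 _ IH2] //.
- case: s => [u v j|u v j k h]; rewrite !act_cat /=; congr act.
  + exact: H1.
  + exact: H2 (far_sym h).
- by rewrite IH1.
Qed.

Lemma act_rev n (X : premaniplex n) (a : word n) (x : X) :
  is_premaniplex X -> act (rev a) (act a x) = x.
Proof.
move=> HX; rewrite -act_cat.
have H := ceq_cancel' a [::]; rewrite cats0 in H.
by rewrite (act_ceq x HX H).
Qed.

Lemma act_rev' n (X : premaniplex n) (a : word n) (x : X) :
  is_premaniplex X -> act a (act (rev a) x) = x.
Proof. by move=> HX; have := act_rev (rev a) x HX; rewrite revK. Qed.

Lemma act_mix2 n m (X : premaniplex n) (Y : premaniplex m) eta (a : word m) (p : mix X Y eta) :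
  (act a p).2 = act a p.2.
Proof. by elim: a => //= i a ->. Qed.

Lemma eta_nil n m (X : premaniplex n) (Y : premaniplex m) eta (y : Y) (x : X) :
  is_premaniplex X -> voltage_assignment eta -> act (eta y [::]) x = x.
Proof.
move=> HX [_ Hc].
have E : act (eta y [::]) x = act (eta y [::]) (act (eta y [::]) x).
  by rewrite -act_cat; apply: act_ceq HX _; exact: (Hc y [::] [::]).
by rewrite -{2}(act_rev (eta y [::]) x HX) {2}E act_rev.
Qed.

Lemma act_mix n m (X : premaniplex n) (Y : premaniplex m) eta (a : word m) (x : X) (y : Y) :
  is_premaniplex X -> voltage_assignment eta ->
  act a ((x, y) : mix X Y eta) = (act (eta y a) x, act a y).
Proof.
move=> HX HV; elim: a => [|i a IH] /=; first by rewrite eta_nil.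
rewrite IH /=; congr pair.
rewrite -act_cat; apply: act_ceq HX _; apply: ceq_sym.
case: HV => _ Hc; exact: (Hc y a [:: i]).
Qed.

Lemma act_comm m (Z : premaniplex m) (g : Z -> Z) (a : word m) (z : Z) :
  (forall i z, g (adj i z) = adj i (g z)) -> g (act a z) = act a (g z).
Proof. by move=> H; elim: a => //= i a <-; rewrite H. Qed.

Lemma lcoset_ceq n (K : word n -> Prop) a b : ceq a b -> lcoset K a = lcoset K b.
Proof.
move=> H; apply: functional_extensionality => u; apply: propositional_extensionality.
split; case=> k [Kk Hu]; exists k; split=> //.
- exact: ceq_trans Hu (ceq_catl _ H).
- exact: ceq_trans Hu (ceq_catl _ (ceq_sym H)).
Qed.

Lemma sig_eq n (K : word n -> Prop) (P Q : coset_flag K) : sval P = sval Q -> P = Q.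
Proof.
case: P => P HP; case: Q => Q HQ /= E; subst Q; f_equal; apply: proof_irrelevance.
Qed.

Lemma svalP' n (K : word n -> Prop) (P : coset_flag K) : exists w, sval P = lcoset K w.
Proof. by case: P. Qed.

Lemma act_coset n (K : word n -> Prop) a (P : coset_premaniplex K) w :
  sval P = lcoset K w -> sval (act a P) = lcoset K (a ++ w).
Proof.
move=> HP; elim: a => [|i a IH] //=.
by rewrite IH lmul_lcoset.
Qed.

Lemma coset_is_premaniplex n (K : word n -> Prop) : is_premaniplex (coset_premaniplex K).
Proof.
split.
- move=> i P; apply: sig_eq; case: (svalP' P) => w Hw.
  change (sval (act [:: i; i] P) = sval P).
  rewrite (act_coset _ Hw) Hw; apply: lcoset_ceq.
  exact: rst_step (cstep_sq [::] w i).
- move=> i j P h; apply: sig_eq; case: (svalP' P) => w Hw.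
  change (sval (act [:: j; i; j; i] P) = sval P).
  rewrite (act_coset _ Hw) Hw; apply: lcoset_ceq.
  exact: rst_step (cstep_far [::] w (far_sym h)).
Qed.

Lemma coset_connected n (K : word n -> Prop) : connected (coset_premaniplex K).
Proof.
move=> P Q; case: (svalP' P) => a Ha; case: (svalP' Q) => b Hb.
exists (b ++ rev a); apply: sig_eq; rewrite (act_coset _ Ha) Hb -catA.
apply: lcoset_ceq.
have := ceq_catr b (ceq_cancel' a [::]); by rewrite !cats0.
Qed.

Definition Ktriv n : word n -> Prop := fun k => ceq k [::].

Lemma Pnil_proof n (w : word n) : exists w', lcoset (@Ktriv n) w = lcoset (@Ktriv n) w'.
Proof. by exists w. Qed.

Definition Pof n (w : word n) : coset_premaniplex (@Ktriv n) :=
  exist _ (lcoset (@Ktriv n) w) (Pnil_proof w).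

Lemma zeta_surj n m (Y : premaniplex m) (eta : Y -> word m -> word n) (y0 : Y) :
  voltage_assignment eta -> preserves_connectivity eta ->
  forall w : word n, exists l, act l y0 = y0 /\ ceq w (eta y0 l).
Proof.
move=> HV HC w.
have Hm := HC _ (@coset_is_premaniplex n (@Ktriv n)) (@coset_connected n (@Ktriv n)).
case: (Hm (Pof [::], y0) (Pof w, y0)) => l.
rewrite act_mix //; last exact: coset_is_premaniplex.
case=> E1 E2; exists l; split=> //.
have := f_equal sval E1; rewrite (@act_coset _ _ _ _ [::]) // => /= E.
have : lcoset (@Ktriv n) w w by exists [::]; split; [exact: ceq_refl | rewrite cats0; exact: ceq_refl].
rewrite -E; case=> k [Hk Hw]; rewrite cats0 in Hw.
apply: ceq_trans Hw _.
have := ceq_catr (eta y0 l) Hk; by rewrite !cats0.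
Qed.

Lemma conj_stab m (Y : premaniplex m) (y0 : Y) v w : is_premaniplex Y ->
  conj_set (stab y0) (rev v) w <-> act w (act v y0) = act v y0.
Proof.
move=> HY; split.
- case=> l [Hl Hw]; rewrite revK in Hw.
  rewrite /stab in Hl.
  by rewrite (act_ceq _ HY Hw) !act_cat act_rev // Hl.
- move=> H; exists (rev v ++ w ++ v); split.
  + by rewrite /stab !act_cat H act_rev.
  + rewrite revK -!catA; apply: ceq_sym.
    apply: ceq_trans (ceq_cancel v (w ++ v ++ rev v)) _.
    have := ceq_catr w (ceq_cancel v [::]); by rewrite !cats0.
Qed.

Lemma lift_main (n m : nat) (X : premaniplex n) (x0 : X)
    (Y : premaniplex m) (eta : Y -> word m -> word n) (y0 : Y) :
  is_premaniplex X -> connected X -> is_premaniplex Y ->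
  voltage_assignment eta -> preserves_connectivity eta ->
  (forall u : word m, ~ in_normaliser (stab y0) u ->
     ~ covers X (Zups eta y0 u)) ->
  forall g : mix X Y eta -> mix X Y eta,
  (forall i p, g (adj i p) = adj i (g p)) ->
  forall x y, (g (x, y)).2 = (g (x0, y)).2.
Proof.
move=> HX HXc HY HV HC Hnc g Hg.
have Hm := HC X HX HXc.
set y1 := (g (x0,y0)).2.
have [v Hv] : exists v, act v y0 = y1.
  case: (Hm (x0,y0) (x0,y1)) => v; rewrite act_mix // => -[_ E]; by exists v.
have Hfix : forall l, act l y0 = y0 -> act (eta y0 l) x0 = x0 -> act l y1 = y1.
  move=> l H1 H2; have := act_comm l ((x0,y0) : mix X Y eta) Hg.
  rewrite act_mix // H1 H2 => E.
  by rewrite /y1 -act_mix2 -E.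
have Hnorm : in_normaliser (stab y0) (rev v).
  case: (classic (in_normaliser (stab y0) (rev v))) => // Hn.
  exfalso; apply: (Hnc _ Hn).
  set K := zeta_img eta y0 (fun w => stab y0 w /\ conj_set (stab y0) (rev v) w).
  have Hsub : forall a b, act a x0 = act b x0 -> forall u, lcoset K a u -> lcoset K b u.
    move=> a b Hab u [k [[mu [[Hmu1 Hmu2] Hk]] Hu]].
    rewrite /stab in Hmu1.
    case: (zeta_surj y0 HV HC (rev b ++ a)) => l [Hl1 Hl2].
    have Hl3 : act (eta y0 l) x0 = x0.
      by rewrite -(act_ceq x0 HX Hl2) act_cat Hab act_rev.
    have Hly1 := Hfix l Hl1 Hl3.
    have Hmuy1 : act mu y1 = y1 by rewrite -Hv; apply/(conj_stab y0 v mu HY).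
    exists (rev b ++ a ++ k); split.
    - exists (l ++ mu); split; [split|].
      + by rewrite /stab act_cat Hmu1 Hl1.
      + by apply/(conj_stab y0 v _ HY); rewrite Hv act_cat Hmuy1 Hly1.
      + have Hc := HV.2 y0 mu l; rewrite Hmu1 in Hc.
        apply: ceq_trans _ (ceq_sym Hc); rewrite catA; exact: ceq_cat.
    - apply: ceq_trans Hu _; apply: ceq_sym; exact: ceq_cancel.
  have Heq : forall a b, act a x0 = act b x0 -> lcoset K a = lcoset K b.
    move=> a b Hab; apply: functional_extensionality => u.
    apply: propositional_extensionality; split; exact: Hsub.
  pose sel x := constructive_indefinite_description _ (HXc x0 x).
  pose F (x : X) : Zups eta y0 (rev v) :=
    exist _ (lcoset K (proj1_sig (sel x))) (ex_intro _ _ erefl).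
  exists F; split.
  - move=> i x; apply: sig_eq => /=; rewrite lmul_lcoset; apply: Heq.
    by rewrite /= (proj2_sig (sel (adj i x))) (proj2_sig (sel x)).
  - move=> z; case: (svalP' z) => w Hw; exists (act w x0); apply: sig_eq => /=.
    rewrite Hw; apply: Heq; exact: proj2_sig (sel _).
have Hy1 : forall l, act l y0 = y0 -> act l y1 = y1.
  by move=> l Hl; rewrite -Hv; apply/(conj_stab y0 v l HY); apply/Hnorm.
move=> x y.
case: (Hm (x0,y0) (x,y)) => a; rewrite act_mix // => -[Ea1 Ea2].
case: (Hm (x0,y0) (x0,y)) => b; rewrite act_mix // => -[Eb1 Eb2].
have E1 : (x,y) = act a ((x0,y0) : mix X Y eta) by rewrite act_mix // Ea1 Ea2.
have E2 : (x0,y) = act b ((x0,y0) : mix X Y eta) by rewrite act_mix // Eb1 Eb2.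
rewrite E1 E2 !act_comm // !act_mix2 -/y1.
have Hl : act (rev b ++ a) y0 = y0 by rewrite act_cat Ea2 -Eb2 act_rev.
have := Hy1 _ Hl; rewrite act_cat => H.
by rewrite -[in RHS]H act_rev'.
Qed.

Theorem theorem6p9 (n m : nat) (X : premaniplex n) (x0 : X)
    (Y : premaniplex m) (eta : Y -> word m -> word n) (y0 : Y) :
  is_premaniplex X -> connected X ->
  voltage_operator eta -> preserves_connectivity eta ->
  (forall u : word m, ~ in_normaliser (stab y0) u ->
     ~ covers X (Zups eta y0 u)) ->
  forall g : mix X Y eta -> mix X Y eta, is_automorphism g ->
    exists tau : Y -> Y, is_automorphism tau /\ is_lift g tau.
Proof.
move=> HX HXc [HY [HV _]] HC Hnc g [[h gh hg] Hg].
have Hlift := lift_main x0 HX HXc HY HV HC Hnc Hg.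
have Hh : forall i p, h (adj i p) = adj i (h p).
  move=> i p; apply: (can_inj gh); by rewrite Hg !hg.
have Hlifth := lift_main x0 HX HXc HY HV HC Hnc Hh.
exists (fun y => (g (x0, y)).2); split; last by case=> x y; exact: Hlift.
split.
- exists (fun y => (h (x0, y)).2).
  + move=> y /=; rewrite -(Hlifth (g (x0,y)).1) -surjective_pairing gh //.
  + move=> y /=; rewrite -(Hlift (h (x0,y)).1) -surjective_pairing hg //.
- move=> i y /=.
  rewrite -(Hlift (act (eta y [:: i]) x0)).
  change ((g (adj i ((x0, y) : mix X Y eta))).2 = adj i (g (x0, y)).2).
  by rewrite Hg.
Qed.
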